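(* Let $a,b\in\mathbb{C}$ and assume $b=[b]$. Then $\langle[a],b\rangle\ge\langle[a+b],b\rangle$.
   Context: Fix an integer $R\ge2$ and $\theta_g=\pi/R$. Polar rounding on $\mathbb{C}$: for $z=Ae^{i\theta}$, $[z]=[A]e^{i[\theta]}$, where $[A]$ is a fixed real rounding function of the modulus and $[\theta]$ is the multiple of $\theta_g$ closest to $\theta$ (minimal error rounding with deterministic tie-breaking). For $u,v\in\mathbb{C}$ (viewed as vectors in $\mathbb{R}^2$), $\langle u,v\rangle\in[0,\pi]$ denotes the smallest angle between $u$ and $v$. *)

(* Defs.v *)
From Stdlib Require Import Reals ZArith.
From Coquelicot Require Import Coquelicot.
Open Scope R_scope.

Definition theta_g (Rg : nat) : R := PI / INR Rg.

(* principal argument in (-PI, PI] of a nonzero complex number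
   (value at 0 is an irrelevant convention) *)
Definition carg (z : C) : R :=
  if Rle_dec 0 (Im z) then acos (Re z / Cmod z) else - acos (Re z / Cmod z).

(* [theta]: a minimal-error rounding of angles to multiples of theta_g;
   being a function, it embodies some deterministic tie-breaking rule *)
Definition is_angle_rounding (Rg : nat) (rth : R -> R) : Prop :=
  forall th : R,
    (exists k : Z, rth th = IZR k * theta_g Rg) /\
    (forall k : Z, Rabs (th - rth th) <= Rabs (th - IZR k * theta_g Rg)).

Definition is_modulus_rounding (rA : R -> R) : Prop :=
  forall x : R, 0 <= x -> 0 <= rA x.

(* polar rounding [z] = [A] e^{i [theta]} for z = A e^{i theta} *)
Definition pround (rA rth : R -> R) (z : C) : C :=
  (rA (Cmod z) * cos (rth (carg z)), rA (Cmod z) * sin (rth (carg z))).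

Definition vangle (u v : C) : R :=
  acos ((Re u * Re v + Im u * Im v) / (Cmod u * Cmod v)).

(* Main.v *)
Require Import Defs.
From Stdlib Require Import Reals ZArith Lra Lia Psatz.
From Coquelicot Require Import Coquelicot.
Open Scope R_scope.

Definition near (g w p : R) : Prop :=
  (exists j : Z, p = IZR j * g) /\ forall k : Z, Rabs (w - p) <= Rabs (w - IZR k * g).

Lemma near_shift g w p m : near g w p -> near g (w - IZR m * g) (p - IZR m * g).
Proof.
  intros [[j Hj] H]; split.
  - exists (j - m)%Z; rewrite minus_IZR; subst; ring.
  - intro k. replace (w - IZR m * g - (p - IZR m * g)) with (w - p) by ring.
    replace (w - IZR m * g - IZR k * g) with (w - IZR (k + m) * g)
      by (rewrite plus_IZR; ring). apply H.
Qed.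

Lemma near_opp g w p : near g w p -> near g (- w) (- p).
Proof.
  intros [[j Hj] H]; split.
  - exists (- j)%Z; rewrite opp_IZR; subst; ring.
  - intro k. replace (- w - - p) with (- (w - p)) by ring.
    replace (- w - IZR k * g) with (- (w - IZR (- k) * g)) by (rewrite opp_IZR; ring).
    rewrite !Rabs_Ropp. apply H.
Qed.

Lemma abs_sq_le x y : Rabs x <= Rabs y -> x * x <= y * y.
Proof.
  intro H. pose proof (Rabs_pos x).
  assert (Rabs x * Rabs x <= Rabs y * Rabs y) by nra.
  rewrite <- !Rabs_mult in H1. rewrite !Rabs_right in H1 by nra. exact H1.
Qed.

Lemma near_mono g w v p q : near g w p -> near g v q -> w < v -> p <= q.
Proof.
  intros [[j Hj] H1] [[l Hl] H2] Hwv.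
  destruct (Rle_or_lt p q) as [|Hlt]; auto.
  exfalso.
  assert (A := H1 l). rewrite <- Hl in A.
  assert (B := H2 j). rewrite <- Hj in B.
  apply abs_sq_le in A; apply abs_sq_le in B. nra.
Qed.

Lemma near_range g n w p : 0 < g -> INR n * g = PI -> 0 <= w <= PI -> near g w p -> 0 <= p <= PI.
Proof.
  intros Hg Hn Hw [[j Hj] H].
  assert (A := H 0%Z). assert (B := H (Z.of_nat n)).
  rewrite <- INR_IZR_INZ, Hn in B.
  rewrite Rmult_0_l, Rminus_0_r in A.
  split.
  - destruct (Rle_or_lt 0 p); auto. exfalso.
    rewrite (Rabs_right w) in A by lra. rewrite Rabs_right in A by lra. lra.
  - destruct (Rle_or_lt p PI); auto. exfalso.
    rewrite (Rabs_left1 (w - p)) in B by lra. rewrite (Rabs_left1 (w - PI)) in B by lra. lra.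
Qed.

Lemma near_PI g n p : INR n * g = PI -> near g PI p -> p = PI.
Proof.
  intros Hn [_ H]. assert (B := H (Z.of_nat n)).
  rewrite <- INR_IZR_INZ, Hn, Rminus_diag, Rabs_R0 in B.
  pose proof (Rabs_pos (PI - p)). assert (Rabs (PI - p) = 0) by lra.
  apply Rabs_eq_0 in H1. lra.
Qed.

Lemma cos_shift2 x m : cos (x - IZR m * (2 * PI)) = cos x.
Proof.
  rewrite cos_minus.
  assert (S : sin (IZR m * (2 * PI)) = 0).
  { apply sin_eq_0_1. exists (2 * m)%Z. rewrite mult_IZR. ring. }
  assert (C : cos (IZR m * (2 * PI)) = 1).
  { replace (IZR m * (2 * PI)) with (2 * (IZR m * PI)) by ring.
    rewrite cos_2a_sin. rewrite sin_eq_0_1 by (exists m; ring). ring. }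
  rewrite S, C. ring.
Qed.

Lemma reduce g n w p : 0 < g -> INR n * g = PI -> near g w p ->
  exists w' p', 0 <= w' <= PI /\ near g w' p' /\ cos w = cos w' /\ cos p = cos p'.
Proof.
  intros Hg Hn Hnear.
  pose proof PI_RGT_0 as HPI.
  set (m := up ((w - PI) / (2 * PI))).
  destruct (archimed ((w - PI) / (2 * PI))) as [A1 A2]. fold m in A1, A2.
  assert (E : IZR m * (2 * PI) = IZR (m * (2 * Z.of_nat n)) * g).
  { rewrite mult_IZR, mult_IZR, <- INR_IZR_INZ. rewrite <- Hn. ring. }
  assert (N := near_shift g w p (m * (2 * Z.of_nat n)) Hnear).
  rewrite <- E in N.
  assert (B1 : w - IZR m * (2 * PI) < PI).
  { assert (IZR m * (2*PI) > (w - PI) / (2 * PI) * (2 * PI)) by (apply Rmult_gt_compat_r; lra).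
    replace ((w - PI) / (2 * PI) * (2 * PI)) with (w - PI) in H by (field; lra). lra. }
  assert (B2 : - PI <= w - IZR m * (2 * PI)).
  { assert (IZR m - (w - PI) / (2 * PI) <= 1) by lra.
    assert ((IZR m - (w - PI) / (2 * PI)) * (2*PI) <= 1 * (2*PI)) by (apply Rmult_le_compat_r; lra).
    replace ((IZR m - (w - PI) / (2 * PI)) * (2 * PI)) with (IZR m * (2*PI) - (w - PI)) in H0 by (field; lra).
    lra. }
  destruct (Rle_or_lt 0 (w - IZR m * (2 * PI))) as [Hp|Hneg].
  - exists (w - IZR m * (2 * PI)), (p - IZR m * (2 * PI)).
    split; [lra|]. split; [exact N|]. split; symmetry; apply cos_shift2.
  - exists (- (w - IZR m * (2 * PI))), (- (p - IZR m * (2 * PI))).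
    split; [lra|]. split; [apply near_opp; exact N|].
    split; rewrite cos_neg; symmetry; apply cos_shift2.
Qed.

Lemma keyL g n b x y p q : 0 < g -> INR n * g = PI -> (exists kb, b = IZR kb * g) ->
  near g x p -> near g y q ->
  (cos (x - b) < cos (y - b) \/ cos (x - b) = -1) -> cos (p - b) <= cos (q - b).
Proof.
  intros Hg Hn [kb Hb] Hp Hq Hc. subst b.
  apply (near_shift _ _ _ kb) in Hp. apply (near_shift _ _ _ kb) in Hq.
  destruct (reduce g n _ _ Hg Hn Hp) as [w1 [p1 [Hw1 [N1 [C1 D1]]]]].
  destruct (reduce g n _ _ Hg Hn Hq) as [w2 [p2 [Hw2 [N2 [C2 D2]]]]].
  rewrite D1, D2. rewrite C1, C2 in Hc.
  pose proof PI_RGT_0.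
  destruct Hc as [Hc|Hc].
  - apply cos_decreasing_0 in Hc; try lra.
    pose proof (near_mono _ _ _ _ _ N2 N1 Hc).
    pose proof (near_range _ _ _ _ Hg Hn Hw1 N1).
    pose proof (near_range _ _ _ _ Hg Hn Hw2 N2).
    destruct (Req_dec p2 p1) as [->|Hne]; [lra|].
    left. apply cos_decreasing_1; lra.
  - assert (w1 = PI).
    { apply cos_inj; try lra. rewrite cos_PI; auto. }
    subst w1. rewrite (near_PI _ _ _ Hn N1), cos_PI.
    pose proof (COS_bound p2); lra.
Qed.

Lemma sq_ne0 (x y : R) : ((x, y) : C) <> 0%C -> 0 < x ^ 2 + y ^ 2.
Proof.
  intro H. destruct (Req_dec x 0) as [->|Hx].
  - destruct (Req_dec y 0) as [->|Hy]; [exfalso; apply H; reflexivity|].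
    assert (0 < y * y) by (apply Rsqr_pos_lt; auto). nra.
  - assert (0 < x * x) by (apply Rsqr_pos_lt; auto). nra.
Qed.

Lemma carg_rep (x y : R) : ((x, y) : C) <> 0%C ->
  x = Cmod (x, y) * cos (carg (x, y)) /\ y = Cmod (x, y) * sin (carg (x, y)).
Proof.
  intro H. pose proof (sq_ne0 x y H) as Hs.
  unfold carg, Cmod; simpl Re; simpl Im; simpl fst; simpl snd.
  set (r := sqrt (x ^ 2 + y ^ 2)).
  assert (Hr : 0 < r) by (apply sqrt_lt_R0; auto).
  assert (Hr2 : r * r = x ^ 2 + y ^ 2) by (apply sqrt_sqrt; lra).
  assert (Hu : -1 <= x / r <= 1).
  { assert (x * x <= r * r) by nra.
    split.
    - apply (Rmult_le_reg_r r); auto. unfold Rdiv. rewrite Rmult_assoc, Rinv_l by lra. nra.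
    - apply (Rmult_le_reg_r r); auto. unfold Rdiv. rewrite Rmult_assoc, Rinv_l by lra. nra. }
  assert (Hsq : r * sqrt (1 - (x / r)²) = Rabs y).
  { rewrite <- (sqrt_Rsqr r) at 1 by lra.
    rewrite <- sqrt_mult_alt by (unfold Rsqr; nra).
    replace (r² * (1 - (x / r)²)) with (y²).
    - apply sqrt_Rsqr_abs.
    - unfold Rsqr. replace (r * r * (1 - x / r * (x / r))) with (r * r - x * x) by (field; lra).
      rewrite Hr2. ring. }
  destruct (Rle_dec 0 y) as [Hy|Hy].
  - rewrite cos_acos, sin_acos by auto. split; [field; lra|].
    rewrite Hsq, Rabs_right; lra.
  - rewrite cos_neg, sin_neg, cos_acos, sin_acos by auto. split; [field; lra|].
    rewrite Ropp_mult_distr_r_reverse, Hsq, Rabs_left; lra.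
Qed.

Lemma cos_carg_minus (x y b : R) : ((x, y) : C) <> 0%C ->
  cos (carg (x, y) - b) = (x * cos b + y * sin b) / Cmod (x, y).
Proof.
  intro H. destruct (carg_rep x y H) as [E1 E2].
  assert (0 < Cmod (x, y)) by (apply Cmod_gt_0; auto).
  rewrite cos_minus. set (m := Cmod (x, y)) in *. set (c := carg (x, y)) in *.
  rewrite E1, E2. field. lra.
Qed.

Lemma carg_scale l x y : 0 < l -> carg (l * x, l * y) = carg (x, y).
Proof.
  intro Hl. unfold carg, Cmod; simpl Re; simpl Im; simpl fst; simpl snd.
  replace ((l * x) ^ 2 + (l * y) ^ 2) with (l² * (x ^ 2 + y ^ 2)) by (unfold Rsqr; ring).
  destruct (Req_dec (x ^ 2 + y ^ 2) 0) as [E|E].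
  - rewrite E, Rmult_0_r, sqrt_0. unfold Rdiv. rewrite Rinv_0, !Rmult_0_r.
    destruct (Rle_dec 0 (l * y)), (Rle_dec 0 y); auto; exfalso; nra.
  - rewrite sqrt_mult_alt by (unfold Rsqr; nra). rewrite sqrt_Rsqr by lra.
    assert (0 <= x ^ 2 + y ^ 2) by nra.
    assert (0 < sqrt (x ^ 2 + y ^ 2)) by (apply sqrt_lt_R0; lra).
    replace (l * x / (l * sqrt (x ^ 2 + y ^ 2))) with (x / sqrt (x ^ 2 + y ^ 2)) by (field; lra).
    destruct (Rle_dec 0 (l * y)), (Rle_dec 0 y); auto; exfalso; nra.
Qed.

Lemma f_mono x y d : d <> 0 -> x < y ->
  x / sqrt (x ^ 2 + d ^ 2) < y / sqrt (y ^ 2 + d ^ 2).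
Proof.
  intros Hd Hxy.
  assert (Hd2 : 0 < d * d) by (apply Rsqr_pos_lt; auto).
  assert (HX : 0 < sqrt (x ^ 2 + d ^ 2)) by (apply sqrt_lt_R0; nra).
  assert (HY : 0 < sqrt (y ^ 2 + d ^ 2)) by (apply sqrt_lt_R0; nra).
  assert (HX2 : sqrt (x ^ 2 + d ^ 2) * sqrt (x ^ 2 + d ^ 2) = x ^ 2 + d ^ 2) by (apply sqrt_sqrt; nra).
  assert (HY2 : sqrt (y ^ 2 + d ^ 2) * sqrt (y ^ 2 + d ^ 2) = y ^ 2 + d ^ 2) by (apply sqrt_sqrt; nra).
  set (X := sqrt (x ^ 2 + d ^ 2)) in *. set (Y := sqrt (y ^ 2 + d ^ 2)) in *.
  apply (Rmult_lt_reg_r (X * Y)); [nra|].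
  replace (x / X * (X * Y)) with (x * Y) by (field; lra).
  replace (y / Y * (X * Y)) with (y * X) by (field; lra).
  destruct (Rle_or_lt 0 x) as [Hx|Hx].
  -
    destruct (Rle_or_lt (y * X) (x * Y)) as [C|C]; auto. exfalso.
    assert (0 <= y * X) by nra.
    assert ((y * X) * (y * X) <= (x * Y) * (x * Y)) by nra.
    assert ((y * X) * (y * X) - (x * Y) * (x * Y) = d * d * (y * y - x * x)) by
      (replace ((y * X) * (y * X)) with (y * y * (X * X)) by ring;
       replace ((x * Y) * (x * Y)) with (x * x * (Y * Y)) by ring; rewrite HX2, HY2; ring).
    assert (y * y - x * x > 0) by nra.
    assert (d * d * (y * y - x * x) > 0) by (apply Rmult_lt_0_compat; lra). lra.
  - destruct (Rle_or_lt 0 y) as [Hy|Hy]; [nra|].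
    destruct (Rle_or_lt (y * X) (x * Y)) as [C|C]; auto. exfalso.
    assert (x * Y < 0) by nra. assert (y * X < 0) by nra.
    assert ((x * Y) * (x * Y) <= (y * X) * (y * X)) by nra.
    assert ((x * Y) * (x * Y) - (y * X) * (y * X) = d * d * (x * x - y * y)) by
      (replace ((y * X) * (y * X)) with (y * y * (X * X)) by ring;
       replace ((x * Y) * (x * Y)) with (x * x * (Y * Y)) by ring; rewrite HX2, HY2; ring).
    assert (x * x - y * y > 0) by nra.
    assert (d * d * (x * x - y * y) > 0) by (apply Rmult_lt_0_compat; lra). lra.
Qed.

Lemma sqrt_sq_abs c : sqrt (c ^ 2 + 0 ^ 2) = Rabs c.
Proof. rewrite <- sqrt_Rsqr_abs. f_equal. unfold Rsqr. ring. Qed.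

Lemma geo (a1 a2 t be : R) : 0 < t -> ((a1, a2) : C) <> 0%C ->
  ((a1 + t * cos be, a2 + t * sin be) : C) <> 0%C ->
  carg (a1 + t * cos be, a2 + t * sin be) = carg (a1, a2) \/
  cos (carg (a1, a2) - be) < cos (carg (a1 + t * cos be, a2 + t * sin be) - be).
Proof.
  intros Ht Ha Hab.
  rewrite !cos_carg_minus by auto.
  assert (Hcs : cos be * cos be + sin be * sin be = 1).
  { pose proof (sin2_cos2 be). unfold Rsqr in H. lra. }
  set (cb := cos be) in *. set (sb := sin be) in *.
  set (c := a1 * cb + a2 * sb). set (d := a1 * sb - a2 * cb).
  assert (E1 : Cmod (a1, a2) = sqrt (c ^ 2 + d ^ 2)).
  { unfold Cmod; cbn [fst snd]. f_equal.
    replace (c ^ 2 + d ^ 2) with ((a1 ^ 2 + a2 ^ 2) * (cb * cb + sb * sb)) by (unfold c, d; ring).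
    rewrite Hcs; ring. }
  assert (E2 : Cmod (a1 + t * cb, a2 + t * sb) = sqrt ((c + t) ^ 2 + d ^ 2)).
  { unfold Cmod; cbn [fst snd]. f_equal.
    assert (H : (c + t * (cb * cb + sb * sb)) ^ 2 + d ^ 2 =
       ((a1 + t * cb) ^ 2 + (a2 + t * sb) ^ 2) * (cb * cb + sb * sb)) by (unfold c, d; ring).
    rewrite Hcs, Rmult_1_r, Rmult_1_r in H. rewrite H; ring. }
  assert (N2 : (a1 + t * cb) * cb + (a2 + t * sb) * sb = c + t).
  { unfold c. replace t with (t * (cb * cb + sb * sb)) at 3 by (rewrite Hcs; ring). ring. }
  rewrite E1, E2, N2. fold c.
  destruct (Req_dec d 0) as [Hd|Hd].
  - assert (A1 : a1 = c * cb).
    { replace a1 with (a1 * (cb * cb + sb * sb)) at 1 by (rewrite Hcs; ring).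
      replace (c * cb) with (c * cb + d * sb) by (rewrite Hd; ring). unfold c, d; ring. }
    assert (A2 : a2 = c * sb).
    { replace a2 with (a2 * (cb * cb + sb * sb)) at 1 by (rewrite Hcs; ring).
      replace (c * sb) with (c * sb - d * cb) by (rewrite Hd; ring). unfold c, d; ring. }
    rewrite Hd, !sqrt_sq_abs.
    assert (Hc : c <> 0).
    { intro Hc0. apply Ha. rewrite A1, A2, Hc0. unfold RtoC. f_equal; ring. }
    assert (Hct : c + t <> 0).
    { intro Hc0. apply Hab. rewrite A1, A2.
      replace (c * cb + t * cb) with ((c + t) * cb) by ring.
      replace (c * sb + t * sb) with ((c + t) * sb) by ring.
      rewrite Hc0. unfold RtoC. f_equal; ring. }
    assert (Hlam : 0 < (c + t) / c -> carg (a1 + t * cb, a2 + t * sb) = carg (a1, a2)).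
    { intro Hl. rewrite <- (carg_scale ((c + t) / c) a1 a2 Hl). f_equal.
      rewrite A1, A2. f_equal; field; auto. }
    destruct (Rlt_or_le 0 c) as [Cp|Cn].
    + left. apply Hlam. apply Rdiv_lt_0_compat; lra.
    + destruct (Rlt_or_le (c + t) 0) as [Ctn|Ctp].
      * left. apply Hlam. assert (c < 0) by lra.
        replace ((c + t) / c) with ((-(c + t)) / (- c)) by (field; auto).
        apply Rdiv_lt_0_compat; lra.
      * right. rewrite Rabs_left by lra. rewrite Rabs_right by lra.
        replace (c / - c) with (-1) by (field; auto).
        replace ((c + t) / (c + t)) with 1 by (field; auto). lra.
  - right. apply f_mono; auto. lra.
Qed.

Lemma cmod_polar s al : 0 <= s -> Cmod (s * cos al, s * sin al) = s.
Proof.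
  intro Hs. unfold Cmod; cbn [fst snd].
  replace ((s * cos al) ^ 2 + (s * sin al) ^ 2) with (s² * ((sin al)² + (cos al)²)) by (unfold Rsqr; ring).
  rewrite sin2_cos2, Rmult_1_r. apply sqrt_Rsqr; auto.
Qed.

Lemma vangle_polar s t al be : 0 < s -> 0 < t ->
  vangle (s * cos al, s * sin al) (t * cos be, t * sin be) = acos (cos (al - be)).
Proof.
  intros Hs Ht. unfold vangle. rewrite !cmod_polar by lra. f_equal.
  unfold Re, Im; cbn [fst snd]. rewrite cos_minus. field. lra.
Qed.

Lemma acos_anti x y : -1 <= x <= 1 -> -1 <= y <= 1 -> x <= y -> acos x >= acos y.
Proof.
  intros Hx Hy Hxy. destruct (Rlt_or_le (acos x) (acos y)) as [H|H]; [|lra].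
  exfalso. pose proof (acos_bound x). pose proof (acos_bound y).
  assert (cos (acos y) < cos (acos x)) by (apply cos_decreasing_1; lra).
  rewrite !cos_acos in H2 by auto. lra.
Qed.

Lemma neg_case t be : 0 < t ->
  cos (carg (- (t * cos be), - (t * sin be)) - be) = -1.
Proof.
  intro Ht.
  assert (Hne : ((- (t * cos be), - (t * sin be)) : C) <> 0%C).
  { intro E. injection E as E1 E2.
    pose proof (sin2_cos2 be). unfold Rsqr in H.
    assert (t * cos be = 0) by lra. assert (t * sin be = 0) by lra.
    assert (cos be = 0) by (apply (Rmult_eq_reg_l t); lra).
    assert (sin be = 0) by (apply (Rmult_eq_reg_l t); lra). nra. }
  rewrite cos_carg_minus by auto.
  replace (- (t * cos be), - (t * sin be)) with ((- t) * cos be, (- t) * sin be) by (f_equal; ring).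
  unfold Cmod; cbn [fst snd].
  replace ((- t * cos be) ^ 2 + (- t * sin be) ^ 2) with (t² * ((sin be)² + (cos be)²)) by (unfold Rsqr; ring).
  rewrite sin2_cos2, Rmult_1_r, sqrt_Rsqr by lra.
  pose proof (sin2_cos2 be). unfold Rsqr in H. field_simplify; [|lra].
  replace (- t * cos be ^ 2 - t * sin be ^ 2) with (- t * (sin be * sin be + cos be * cos be)) by ring.
  rewrite H. field. lra.
Qed.

Lemma case_nonzero g n rth t be a1 a2 : 0 < g -> INR n * g = PI ->
  (forall th, near g th (rth th)) -> (exists k, be = IZR k * g) -> 0 < t ->
  ((a1, a2) : C) <> 0%C ->
  cos (rth (carg (a1, a2)) - be) <= cos (rth (carg (Cplus (a1, a2) (t * cos be, t * sin be))) - be).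
Proof.
  intros Hg Hn Hnear Hgrid Ht Ha.
  replace (Cplus (a1, a2) (t * cos be, t * sin be)) with ((a1 + t * cos be, a2 + t * sin be) : C)
    by reflexivity.
  assert (Hsum : (((a1 + t * cos be, a2 + t * sin be) : C) = 0%C) \/
                 ((a1 + t * cos be, a2 + t * sin be) : C) <> 0%C).
  { destruct (Req_dec (a1 + t * cos be) 0) as [X|X];
      [destruct (Req_dec (a2 + t * sin be) 0) as [Y|Y]|].
    - left. rewrite X, Y. reflexivity.
    - right. intro E. injection E as E1 E2. lra.
    - right. intro E. injection E as E1 E2. lra. }
  destruct Hsum as [Z|Z].
  - injection Z as Z1 Z2.
    replace (a1, a2) with (- (t * cos be), - (t * sin be)) by (f_equal; lra).
    apply (keyL g n be _ _ _ _ Hg Hn Hgrid (Hnear _) (Hnear _)).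
    right. apply neg_case; auto.
  - destruct (geo a1 a2 t be Ht Ha Z) as [G|G].
    + rewrite G. lra.
    + apply (keyL g n be _ _ _ _ Hg Hn Hgrid (Hnear _) (Hnear _)). left; exact G.
Qed.

Theorem lemma22 (Rg : nat) (rA rth : R -> R) (a b : C) :
  (2 <= Rg)%nat ->
  is_modulus_rounding rA ->
  is_angle_rounding Rg rth ->
  b = pround rA rth b ->
  b <> 0%C ->
  pround rA rth a <> 0%C ->
  pround rA rth (a + b)%C <> 0%C ->
  vangle (pround rA rth a) b >= vangle (pround rA rth (a + b)%C) b.
Proof.
  intros HRg HrA Hrth Hbb Hb0 Ha0 Hab0.
  set (g := theta_g Rg).
  assert (HINR : 0 < INR Rg) by (apply lt_0_INR; lia).
  assert (Hg : 0 < g) by (unfold g, theta_g; apply Rdiv_lt_0_compat; [apply PI_RGT_0|lra]).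
  assert (Hn : INR Rg * g = PI) by (unfold g, theta_g; field; lra).
  assert (Hnear : forall th, near g th (rth th)) by (intro th; apply Hrth).
  assert (Hpos : forall z, pround rA rth z <> 0%C -> 0 < rA (Cmod z)).
  { intros z Hz. destruct (Rle_lt_or_eq_dec 0 (rA (Cmod z))) as [H|H];
      [apply HrA, Cmod_ge_0| exact H|].
    exfalso. apply Hz. unfold pround. rewrite <- H. unfold RtoC. f_equal; ring. }
  assert (Hbpos := Hpos b ltac:(rewrite <- Hbb; exact Hb0)).
  destruct (proj1 (Hrth (carg b))) as [kb Hkb].
  unfold pround in Hbb.
  set (t := rA (Cmod b)) in *. set (be := rth (carg b)) in *.
  assert (Hbe : rth (carg b) = be) by reflexivity.
  clearbody t be. subst b.
  assert (Hgrid : exists k, be = IZR k * g) by (exists kb; exact Hkb).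
  assert (Hround : forall z, pround rA rth z <> 0%C ->
     vangle (pround rA rth z) (t * cos be, t * sin be) = acos (cos (rth (carg z) - be))).
  { intros z Hz. unfold pround. apply vangle_polar; auto. }
  rewrite !Hround by auto.
  apply acos_anti; try apply COS_bound.
  destruct a as [a1 a2].
  destruct (Req_dec a1 0) as [E1|E1]; [destruct (Req_dec a2 0) as [E2|E2]|].
  -
    subst a1 a2.
    replace (Cplus (0, 0) (t * cos be, t * sin be)) with ((t * cos be, t * sin be) : C)
      by (unfold Cplus; cbn [fst snd]; f_equal; ring).
    rewrite Hbe, Rminus_diag, cos_0. apply COS_bound.
  - apply (case_nonzero g Rg); auto. intro E; injection E as E1' E2'; lra.
  - apply (case_nonzero g Rg); auto. intro E; injection E as E1' E2'; lra.
Qed.
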